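(* Let $d$ be a positive integer and let $A\in\mathbb{R}^{[2]\times[n]}$ be a matrix that cannot be eliminated at any column. Then there exists $b\in\mathbb{R}^{[2]}$ such that the solution graph $G(R(A,b))$ is not connected.
   Context: Fix a positive integer $d$ and let $D=\{0,1,\dots,d\}$; $[n]=\{1,\dots,n\}$. For $A\in\mathbb{R}^{[m]\times[n]}$ and $b\in\mathbb{R}^{[m]}$, $R(A,b)=\{x\in D^{[n]} : Ax\ge b\}$. For $R\subseteq D^{[n]}$, the solution graph $G(R)$ is the undirected graph with vertex set $R$ in which $x,y$ are adjacent iff they differ in exactly one coordinate. A matrix $A=(a_{ij})\in\mathbb{R}^{[m]\times[n]}$ can be eliminated at column $j\in[n]$ if (i) for every row $i$ with $a_{ij}>0$ we have $a_{ij'}=0$ for all $j'\in[n]\setminus\{j\}$, or (ii) for every row $i$ with $a_{ij}<0$ we have $a_{ij'}=0$ for all $j'\in[n]\setminus\{j\}$. *)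

(* Defs.v *)
From mathcomp Require Import all_boot all_order all_algebra.
From mathcomp Require Import reals.
Set Implicit Arguments. Unset Strict Implicit. Unset Printing Implicit Defensive.
Import Order.TTheory GRing.Theory Num.Theory.
Local Open Scope ring_scope.

(* D = {0,...,d} is represented by 'I_d.+1 ; points of D^[n] are finite
   functions 'I_n -> 'I_d.+1 (coordinates j : 'I_n stand for j+1 in [n]). *)
Definition point (d n : nat) := {ffun 'I_n -> 'I_d.+1}.

Definition solset (R : realType) (d m n : nat) (A : 'M[R]_(m, n)) (b : 'cV[R]_m)
  : {set point d n} :=
  [set x : point d n | [forall i : 'I_m,
      b i 0 <= \sum_(j < n) A i j * (nat_of_ord (x j))%:R]].

Definition adj1 (d n : nat) (x y : point d n) : bool :=
  #|[set j : 'I_n | x j != y j]| == 1%N.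

Definition solgraph_rel (d n : nat) (S : {set point d n}) : rel (point d n) :=
  fun x y => [&& x \in S, y \in S & adj1 x y].

Definition graph_connected (d n : nat) (S : {set point d n}) : Prop :=
  forall x y, x \in S -> y \in S -> connect (solgraph_rel S) x y.

Definition elim_at (R : realType) (m n : nat) (A : 'M[R]_(m, n)) (j : 'I_n) : Prop :=
  (forall i : 'I_m, 0 < A i j -> forall j' : 'I_n, j' != j -> A i j' = 0) \/
  (forall i : 'I_m, A i j < 0 -> forall j' : 'I_n, j' != j -> A i j' = 0).

(* Main.v *)
Require Import Defs.
From mathcomp Require Import all_boot all_order all_algebra.
From mathcomp Require Import reals.
From mathcomp Require Import lra.
Import Order.TTheory GRing.Theory Num.Theory.
Local Open Scope ring_scope.

Section Aux.
Variables (R : realType) (d n : nat) (A : 'M[R]_(2, n)).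

Definition rv (i : 'I_2) (x : point d n) : R :=
  \sum_(j < n) A i j * (nat_of_ord (x j))%:R.

Definition i0 : 'I_2 := ord0.
Definition i1 : 'I_2 := ord_max.

Lemma i01 (i : 'I_2) : i = i0 \/ i = i1.
Proof. by case: i => [[|[|]]] // p; [left|right]; apply: val_inj. Qed.

Lemma inS b x : (x \in solset d A b) = [forall i, b i 0 <= rv i x].
Proof. by rewrite inE. Qed.

Lemma adj_ex {x w : point d n} : Defs.adj1 x w ->
  exists j, (forall l, l != j -> x l = w l) /\ x j != w j.
Proof.
rewrite /Defs.adj1 => /cards1P [j hj]. exists j; split.
  move=> l lj; apply/eqP; apply: (contraNT _ lj) => h.
  have : l \in [set j0 | x j0 != w j0] by rewrite inE.
  by rewrite hj inE.
have : j \in [set j] by rewrite inE.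
by rewrite -hj inE.
Qed.

Lemma adj1C (x y : point d n) : Defs.adj1 x y = Defs.adj1 y x.
Proof.
rewrite /Defs.adj1 (_ : [set j | x j != y j] = [set j | y j != x j]) //.
by apply/setP => l; rewrite !inE eq_sym.
Qed.

Lemma adj_neq {x y : point d n} : Defs.adj1 x y -> x != y.
Proof.
move=> /adj_ex [j [_ h]]; apply: contraNN h => /eqP ->; by [].
Qed.

Lemma rv_diff i {x w : point d n} {j} : (forall l, l != j -> x l = w l) ->
  rv i w - rv i x = A i j * ((nat_of_ord (w j))%:R - (nat_of_ord (x j))%:R).
Proof.
move=> H. rewrite /rv (bigD1 j) //= [X in _ - X](bigD1 j) //=.
rewrite [X in _ - (_ + X)](eq_bigr (fun l => A i l * (nat_of_ord (w l))%:R)); last first.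
  by move=> l /H ->.
rewrite mulrBr. lra.
Qed.

Lemma case1 (hpos : forall j, exists i, 0 < A i j)
  (hneg : forall j, exists i, A i j < 0) (x y : point d n) :
  x != y -> (forall i, rv i x <= rv i y) ->
  ~ graph_connected (solset d A (\col_i rv i x)).
Proof.
move=> nxy hle hc.
have xS : x \in solset d A (\col_i rv i x).
  by rewrite inS; apply/forallP => i; rewrite mxE.
have yS : y \in solset d A (\col_i rv i x).
  by rewrite inS; apply/forallP => i; rewrite mxE.
have /connectP [[|w p] /=] := hc x y xS yS.
  by move=> _ exy; rewrite exy eqxx in nxy.
move/andP => [/and3P [_ wS axw] _] _.
have [j [hj nj]] := adj_ex axw.
have hdf := fun i => rv_diff i hj.
move: wS; rewrite inS => /forallP hw.
case: (ltngtP (x j) (w j)) => c.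
- have [i hi] := hneg j. have := hw i; rewrite mxE => h1.
  have := hdf i.
  have : 0 < (nat_of_ord (w j))%:R - (nat_of_ord (x j))%:R :> R.
    by rewrite subr_gt0 ltr_nat.
  move=> h2 h3. nra.
- have [i hi] := hpos j. have := hw i; rewrite mxE => h1.
  have := hdf i.
  have : (nat_of_ord (w j))%:R - (nat_of_ord (x j))%:R < 0 :> R.
    by rewrite subr_lt0 ltr_nat.
  move=> h2 h3. nra.
- by move/val_inj: c => c; rewrite c eqxx in nj.
Qed.

Lemma mid {x y z : point d n} : x != y -> ~~ Defs.adj1 x y -> Defs.adj1 x z -> Defs.adj1 z y ->
  forall l, z l = x l \/ z l = y l.
Proof.
move=> nxy nadj /adj_ex [j [hj _]] /adj_ex [k [hk _]] l.
case: (eqVneq (z l) (x l)) => [->|zx]; first by left.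
case: (eqVneq (z l) (y l)) => [->|zy]; first by right.
exfalso.
have lj : l = j by apply/eqP; apply: (contraNT _ zx) => /hj ->.
have lk : l = k by apply/eqP; apply: (contraNT _ zy) => /hk ->.
have sub : [set l' | x l' != y l'] \subset [set j].
  apply/subsetP => l'; rewrite !inE => h; apply: contraNT h => h.
  have h' : l' != k by rewrite -lk lj.
  by rewrite (hj _ h) (hk _ h').
have := subset_leq_card sub; rewrite cards1 leq_eqVlt.
move: nadj; rewrite /Defs.adj1 => /negbTE -> /=; rewrite ltnS leqn0 cards_eq0 => /eqP e.
move: nxy => /eqP; apply; apply/ffunP => l'; apply/eqP; apply: contraT => h.
have : l' \in [set l' | x l' != y l'] by rewrite inE.
by rewrite e inE.
Qed.


Lemma neqC (T : eqType) (a b : T) : a != b -> b != a.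
Proof. by rewrite eq_sym. Qed.

Section Case2.
Hypothesis hac : forall x y : point d n, x != y ->
  ~~ ((rv i0 x <= rv i0 y) && (rv i1 x <= rv i1 y)).

Lemma inj {x y : point d n} : x != y -> rv i0 x != rv i0 y.
Proof.
move=> nxy; apply/eqP => e.
case: (lerP (rv i1 x) (rv i1 y)) => h.
  by move: (hac _ _ nxy); rewrite e lexx h.
by move: (hac _ _ (neqC _ _ _ nxy)); rewrite e lexx (ltW h).
Qed.

Lemma anti {x y : point d n} : x != y -> rv i0 x < rv i0 y -> rv i1 y < rv i1 x.
Proof.
move=> nxy h; rewrite ltNge; apply: contraNN (hac _ _ nxy) => h'.
by rewrite (ltW h) h'.
Qed.

Definition cnt (x y : point d n) :=
  #|[set w : point d n | rv i0 x < rv i0 w < rv i0 y]|.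

Lemma cnt_lt (a b x y w : point d n) : rv i0 x <= rv i0 a -> rv i0 b <= rv i0 y ->
  rv i0 x < rv i0 w < rv i0 y -> ~~ (rv i0 a < rv i0 w < rv i0 b) ->
  (cnt a b < cnt x y)%N.
Proof.
move=> hxa hby hw hnw; apply: proper_card; apply/properP; split.
  apply/subsetP => z; rewrite !inE => /andP [h1 h2].
  apply/andP; split; [exact: le_lt_trans hxa h1 | exact: lt_le_trans h2 hby].
by exists w; rewrite inE.
Qed.

Lemma key k : forall x y : point d n, (cnt x y < k)%N -> rv i0 x < rv i0 y ->
  ~~ Defs.adj1 x y ->
  exists x' y', [/\ rv i0 x' < rv i0 y', ~~ Defs.adj1 x' y' & cnt x' y' = 0%N].
Proof.
elim: k => [//|k IH] x y hk hxy nadj.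
rewrite ltnS in hk.
case: (eqVneq (cnt x y) 0%N) => [c0|cn]; first by exists x, y.
have [z] : exists z, z \in [set w : point d n | rv i0 x < rv i0 w < rv i0 y].
  by apply/set0Pn; rewrite -cards_eq0.
rewrite inE => /andP [xz zy].
have xzy : rv i0 x < rv i0 z < rv i0 y by rewrite xz zy.
have nxy : x != y by apply: contraTneq hxy => ->; rewrite ltxx.
case: (boolP (Defs.adj1 x z)) => axz; last first.
  apply: (IH x z) => //.
  apply: leq_trans _ hk; apply: (cnt_lt x z x y z) => //; try lra.
case: (boolP (Defs.adj1 z y)) => azy; last first.
  apply: (IH z y) => //.
  apply: leq_trans _ hk; apply: (cnt_lt z y x y z) => //; try lra.
have hm := mid nxy nadj axz azy.
pose z' : point d n := [ffun l => if z l == x l then y l else x l].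
have hsum : forall i, rv i z + rv i z' = rv i x + rv i y.
  move=> i; rewrite /rv -!big_split; apply: eq_bigr => l _ /=.
  rewrite -!mulrDr ffunE; congr (_ * _).
  case: (eqVneq (z l) (x l)) => [->|ne]; first by [].
  case: (hm l) => e; first by rewrite e eqxx in ne.
  by rewrite e addrC.
have hdiff : [set l | z l != z' l] = [set l | x l != y l].
  apply/setP => l; rewrite !inE ffunE.
  case: (eqVneq (z l) (x l)) => [->|ne]; first by [].
  case: (hm l) => e; first by rewrite e eqxx in ne.
  by rewrite e eq_sym.
have nadj' : ~~ Defs.adj1 z z' by rewrite /Defs.adj1 hdiff.
have nzz : z != z'.
  apply: contraNneq nxy => e.
  apply/eqP/ffunP => l; apply/eqP; apply: contraT => h.
  have : l \in [set l | x l != y l] by rewrite inE.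
  by rewrite -hdiff inE e eqxx.
have h0 := hsum i0.
case: (ltgtP (rv i0 z) (rv i0 z')) => c.
- apply: (IH z z') => //.
  apply: leq_trans _ hk; apply: (cnt_lt z z' x y z) => //; try lra.
- apply: (IH z' z) => //; last by rewrite adj1C.
  apply: leq_trans _ hk; apply: (cnt_lt z' z x y z) => //; try lra.
- by move: (inj nzz); rewrite c eqxx.
Qed.

Lemma case2 (x y : point d n) : rv i0 x < rv i0 y -> ~~ Defs.adj1 x y ->
  cnt x y = 0%N ->
  ~ graph_connected (solset d A (\col_i (if i == i0 then rv i0 x else rv i1 y))).
Proof.
move=> hxy nadj c0 hc.
have nxy : x != y by apply: contraTneq hxy => ->; rewrite ltxx.
have hb : forall (w : point d n), w \in solset d A (\col_i (if i == i0 then rv i0 x else rv i1 y))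
   = (rv i0 x <= rv i0 w) && (rv i1 y <= rv i1 w).
  move=> w; rewrite inS; apply/forallP/andP.
    move=> h; split; [move: (h i0) | move: (h i1)]; by rewrite mxE.
  move=> [h1 h2] i; rewrite mxE; case: (i01 i) => ->; first by rewrite eqxx.
  by [].
have xS : x \in solset d A (\col_i (if i == i0 then rv i0 x else rv i1 y)).
  by rewrite hb lexx ltW // anti.
have yS : y \in solset d A (\col_i (if i == i0 then rv i0 x else rv i1 y)).
  by rewrite hb lexx ltW.
have /connectP [[|w p] /=] := hc x y xS yS.
  by move=> _ exy; rewrite exy eqxx in nxy.
move/andP => [/and3P [_ wS axw] _] _.
move: wS; rewrite hb => /andP [h1 h2].
have nxw := adj_neq axw.
have nwy : w != y by apply: contraNneq nadj => <-.
have h1' : rv i0 x < rv i0 w by rewrite lt_neqAle h1 inj.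
have h2' : rv i0 w < rv i0 y.
  rewrite ltNge; apply: contraNN (hac _ _ (neqC _ _ _ nwy)) => h.
  by rewrite h h2.
have : w \in [set w : point d n | rv i0 x < rv i0 w < rv i0 y] by rewrite inE h1' h2'.
by move/eqP: c0; rewrite cards_eq0 => /eqP ->; rewrite inE.
Qed.

End Case2.
End Aux.
Arguments rv {R d n}.
Arguments cnt {R d n}.
Arguments case1 {R d n A}.
Arguments inj {R d n A}.
Arguments key {R d n A}.
Arguments case2 {R d n A}.

Theorem lemma3 (R : realType) (d n : nat) (hd : (0 < d)%N) (hn : (0 < n)%N)
    (A : 'M[R]_(2, n)) (hA : forall j : 'I_n, ~ elim_at A j) :
  exists b : 'cV[R]_2, ~ graph_connected (solset d A b).
Proof.
have hpos : forall j, exists i, 0 < A i j.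
  move=> j; case: (boolP [exists i, 0 < A i j]) => [/existsP //|/existsPn h].
  exfalso; apply: (hA j); left => i hi; by move: (h i); rewrite hi.
have hneg : forall j, exists i, A i j < 0.
  move=> j; case: (boolP [exists i, A i j < 0]) => [/existsP //|/existsPn h].
  exfalso; apply: (hA j); right => i hi; by move: (h i); rewrite hi.
pose j0 : 'I_n := Ordinal hn.
have [k hk] : exists k, k != j0.
  case: (boolP [exists k, k != j0]) => [/existsP //|/existsPn h].
  exfalso; apply: (hA j0); left => i _ j' nj'; by move: (h j'); rewrite nj'.
case: (boolP [exists x : point d n, exists y : point d n,
   (x != y) && [forall i, rv A i x <= rv A i y]]).
  move=> /existsP [x /existsP [y /andP [nxy /forallP hle]]].
  exists (\col_i rv A i x). exact: (case1 hpos hneg x y nxy hle).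
move=> /existsPn hne.
have hac : forall x y : point d n, x != y ->
    ~~ ((rv A i0 x <= rv A i0 y) && (rv A i1 x <= rv A i1 y)).
  move=> x y nxy; apply/negP => /andP [h1 h2].
  move: (hne x) => /existsPn /(_ y); rewrite nxy /=; apply/negP/negPn.
  by apply/forallP => i; case: (i01 i) => ->.
pose x0 : point d n := [ffun=> ord0].
pose y0 : point d n := [ffun l => if (l == j0) || (l == k) then ord_max else ord0].
have hdiff : [set l | x0 l != y0 l] = [set j0; k].
  apply/setP => l; rewrite !inE !ffunE.
  case: ((l == j0) || (l == k)); last by rewrite eqxx.
  by rewrite -val_eqE /= eq_sym -lt0n hd.
have nadj : ~~ Defs.adj1 x0 y0.
  have hk' : j0 != k by rewrite eq_sym.
  by rewrite /Defs.adj1 hdiff cards2 hk'.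
have nxy : x0 != y0.
  apply/negP => /eqP e; move: hdiff; rewrite e.
  move/setP => /(_ j0); rewrite !inE eqxx /=.
  by [].
have := inj hac x0 y0 nxy.
case: (ltgtP (rv A i0 x0) (rv A i0 y0)) => c _ //.
- have [x [y [hxy nad c0]]] := key hac (cnt A x0 y0).+1 x0 y0 (leqnn _) c nadj.
  exists (\col_i (if i == i0 then rv A i0 x else rv A i1 y)); exact: (case2 hac x y hxy nad c0).
- have [x [y [hxy nad c0]]] := key hac (cnt A y0 x0).+1 y0 x0 (leqnn _) c
    ltac:(by rewrite adj1C).
  exists (\col_i (if i == i0 then rv A i0 x else rv A i1 y)); exact: (case2 hac x y hxy nad c0).
Qed.
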